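(* Let $C_*>1$. There is a constant $C>0$ depending only on $C_*$ such that the following holds. Let $\mathscr{T}$ be a $C_*$-regular triangular complex in $\mathbb{R}^3$ with chosen triangle unit normals $\bar n(\kappa)$, and let $n$ be a unit edge director on $\mathscr{T}$. Then for every edge $e=\kappa\cap\kappa'\in\mathscr{E}(\mathscr{T})$, \[ |n(e)-\bar n(\kappa)|\le C\,(\mathrm{diam}\,\kappa)\,|Dn_\kappa|. \]
   Context: A triangle is $\kappa=\mathrm{conv}(x,y,z)\subset\mathbb{R}^3$ with $x,y,z$ not collinear; its edges are $[x,y],[y,z],[x,z]$; its unit normal $\bar n(\kappa)$ is one of the two vectors $\pm\frac{(y-x)\times(z-x)}{|(y-x)\times(z-x)|}$ (fixed by a choice). A triangular complex is a finite family of triangles, any two distinct of which intersect in the empty set, a common vertex, or a whole common edge; $\mathscr{E}(\mathscr{T})$ is its set of edges. It is $C_*$-regular if $\mathcal{H}^2(\kappa)\ge C_*^{-1}(\mathrm{diam}\,\kappa)^2$ for all $\kappa$. A unit edge director is a map $n:\mathscr{E}(\mathscr{T})\to S^2$ with $n(e)\cdot\tau(e)=0$ (where $\tau(e)$ is a unit vector along $e$) and $n(e)\cdot\bar n(\kappa)\ge0$ for every triangle $\kappa$ containing $e$. On each $\kappa$, $n$ is extended to the unique affine map $\kappa\to\mathbb{R}^3$ taking the value $n(e)$ at the midpoint of each edge $e$ of $\kappa$; $Dn_\kappa\in\mathbb{R}^{3\times3}$ is its (constant) gradient, viewed as a linear map on the plane of $\kappa$ precomposed with the orthogonal projection onto that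 plane; $|\cdot|$ is a matrix norm. *)

(* Defs.v *)
From mathcomp Require Import all_boot all_order all_algebra.
From mathcomp Require Import boolp classical_sets reals.
Set Implicit Arguments. Unset Strict Implicit. Unset Printing Implicit Defensive.
Import Order.TTheory GRing.Theory Num.Theory.
Local Open Scope ring_scope.
Local Open Scope classical_set_scope.

Section Geometry.
Variable R : realType.

Definition vec := 'rV[R]_3.

Definition dot (u v : vec) : R := \sum_(i < 3) u 0 i * v 0 i.
Definition enorm (u : vec) : R := Num.sqrt (dot u u).
Definition frob (A : 'M[R]_3) : R := Num.sqrt (\sum_(i < 3) \sum_(j < 3) A i j ^+ 2).

Definition cross (u v : vec) : vec :=
  \row_(i < 3) (if i == 0%N :> nat then u 0 1 * v 0 2 - u 0 2 * v 0 1
                else if i == 1%N :> nat then u 0 2 * v 0 0 - u 0 0 * v 0 2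
                else u 0 0 * v 0 1 - u 0 1 * v 0 0).

Definition triple := (vec * vec * vec)%type.
Definition tx (t : triple) : vec := t.1.1.
Definition ty (t : triple) : vec := t.1.2.
Definition tz (t : triple) : vec := t.2.

Definition seg (a b : vec) : set vec :=
  [set p | exists l : R, 0 <= l /\ l <= 1 /\ p = (1 - l) *: a + l *: b].

Definition tri (t : triple) : set vec :=
  [set p | exists a b c : R, [/\ 0 <= a, 0 <= b, 0 <= c, a + b + c = 1 &
      p = a *: tx t + b *: ty t + c *: tz t]].

Definition tcross (t : triple) : vec := cross (ty t - tx t) (tz t - tx t).

Definition noncollinear (t : triple) : Prop := tcross t != 0.

Definition is_vertex_of (t : triple) (v : vec) : Prop :=
  v = tx t \/ v = ty t \/ v = tz t.

Definition is_edge_of (t : triple) (e : set vec) : Prop :=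
  e = seg (tx t) (ty t) \/ e = seg (ty t) (tz t) \/ e = seg (tx t) (tz t).

Definition edge_endpoints (t : triple) (a b : vec) : Prop :=
  (a = tx t /\ b = ty t) \/ (a = ty t /\ b = tz t) \/ (a = tx t /\ b = tz t).

Definition diam (S : set vec) : R :=
  sup [set r | exists p q, [/\ S p, S q & r = enorm (p - q)]].

Definition area (t : triple) : R := enorm (tcross t) / 2.

Definition triangular_complex (T : seq triple) : Prop :=
  (forall t, t \in T -> noncollinear t) /\
  (forall t t', t \in T -> t' \in T -> tri t <> tri t' ->
     tri t `&` tri t' = set0 \/
     (exists v, [/\ is_vertex_of t v, is_vertex_of t' v & tri t `&` tri t' = [set v]]) \/
     (exists e, [/\ is_edge_of t e, is_edge_of t' e & tri t `&` tri t' = e])).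

Definition edges (T : seq triple) : set (set vec) :=
  [set e | exists2 t, t \in T & is_edge_of t e].

Definition regular (Cs : R) (T : seq triple) : Prop :=
  forall t, t \in T -> area t >= Cs^-1 * diam (tri t) ^+ 2.

Definition normal_choice (T : seq triple) (nbar : set vec -> vec) : Prop :=
  forall t, t \in T ->
    nbar (tri t) = (enorm (tcross t))^-1 *: tcross t \/
    nbar (tri t) = - ((enorm (tcross t))^-1 *: tcross t).

Definition unit_edge_director (T : seq triple) (nbar : set vec -> vec)
    (n : set vec -> vec) : Prop :=
  forall t a b, t \in T -> edge_endpoints t a b ->
    [/\ enorm (n (seg a b)) = 1,
        dot (n (seg a b)) ((enorm (b - a))^-1 *: (b - a)) = 0 &
        forall t', t' \in T -> is_edge_of t' (seg a b) ->
          0 <= dot (n (seg a b)) (nbar (tri t'))].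

Definition midpoint (a b : vec) : vec := 2^-1 *: (a + b).

Definition plane_proj (t : triple) : 'M[R]_3 :=
  let nu := (enorm (tcross t))^-1 *: tcross t in 1%:M - nu^T *m nu.

(* A (acting on row vectors u |-> u *m A) is Dn_kappa: the gradient of the
   affine map on kappa taking value n(e) at the midpoint of each edge e,
   viewed as a linear map on the plane precomposed with the projection *)
Definition is_Dn (n : set vec -> vec) (t : triple) (A : 'M[R]_3) : Prop :=
  (exists c : vec,
     [/\ c + midpoint (tx t) (ty t) *m A = n (seg (tx t) (ty t)),
         c + midpoint (ty t) (tz t) *m A = n (seg (ty t) (tz t)) &
         c + midpoint (tx t) (tz t) *m A = n (seg (tx t) (tz t))]) /\
  A = plane_proj t *m A.

End Geometry.

(* Main.v *)
Require Import Defs.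
From mathcomp Require Import all_boot all_order all_algebra.
From mathcomp Require Import boolp classical_sets reals.
From mathcomp Require Import ring lra.
Import Order.TTheory GRing.Theory Num.Theory.
Local Open Scope ring_scope.
Local Open Scope classical_set_scope.
Set Implicit Arguments. Unset Strict Implicit.

Section S.
Variable R : realType.
Implicit Types (u v w m : vec R).

Lemma sum3 (f : 'I_3 -> R) : \sum_(i < 3) f i = f 0 + f 1 + f 2.
Proof.
rewrite !big_ord_recr big_ord0 /= add0r.
by congr (f _ + f _ + f _); apply: val_inj.
Qed.

Lemma dotE u v : dot u v = u 0 0 * v 0 0 + u 0 1 * v 0 1 + u 0 2 * v 0 2.
Proof. by rewrite /dot sum3. Qed.

Lemma cs3 (a b c d e f : R) :
  (a * d + b * e + c * f) ^+ 2 <= (a*a+b*b+c*c)*(d*d+e*e+f*f).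
Proof.
have -> : (a * d + b * e + c * f) ^+ 2 = (a*a+b*b+c*c)*(d*d+e*e+f*f)
   - ((a*e-b*d)^+2 + (a*f-c*d)^+2 + (b*f-c*e)^+2) by ring.
by rewrite lerBlDr lerDl !addr_ge0 // sqr_ge0.
Qed.

Lemma CS u v : dot u v ^+ 2 <= dot u u * dot v v.
Proof. by rewrite !dotE cs3. Qed.

Lemma dot_ge0 u : 0 <= dot u u.
Proof. by rewrite dotE !addr_ge0 // -expr2 sqr_ge0. Qed.

Lemma enorm_sq u : enorm u ^+ 2 = dot u u.
Proof. by rewrite /enorm sqr_sqrtr // dot_ge0. Qed.

Lemma enorm_ge0 u : 0 <= enorm u.
Proof. exact: sqrtr_ge0. Qed.

Lemma frob_bound w (A : 'M[R]_3) : dot (w *m A) (w *m A) <= dot w w * frob A ^+ 2.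
Proof.
rewrite /frob sqr_sqrtr; last by apply: sumr_ge0 => i _; apply: sumr_ge0 => j _; apply: sqr_ge0.
rewrite dotE !mxE !sum3 dotE.
set w0 := w 0 0; set w1 := w 0 1; set w2 := w 0 2.
set a00 := A 0 0; set a01 := A 0 1; set a02 := A 0 2.
set a10 := A 1 0; set a11 := A 1 1; set a12 := A 1 2.
set a20 := A 2 0; set a21 := A 2 1; set a22 := A 2 2.
have -> : (w0 * w0 + w1 * w1 + w2 * w2) *
  (a00 ^+ 2 + a01 ^+ 2 + a02 ^+ 2 + (a10 ^+ 2 + a11 ^+ 2 + a12 ^+ 2) +
   (a20 ^+ 2 + a21 ^+ 2 + a22 ^+ 2)) =
  (w0 * w0 + w1 * w1 + w2 * w2) * (a00*a00 + a10*a10 + a20*a20)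
  + (w0 * w0 + w1 * w1 + w2 * w2) * (a01*a01 + a11*a11 + a21*a21)
  + (w0 * w0 + w1 * w1 + w2 * w2) * (a02*a02 + a12*a12 + a22*a22) by ring.
by rewrite -!expr2; repeat apply: lerD; apply: cs3.
Qed.


Lemma coord3 (al be ga X Y Z : R) : al ^+ 2 <= 1 -> be ^+ 2 <= 1 -> ga ^+ 2 <= 1 ->
  (al * X + be * Y + ga * Z) ^+ 2 <= 3 * (X * X + Y * Y + Z * Z).
Proof.
move=> ha hb hc.
have e : (al * X + be * Y + ga * Z) ^+ 2 = 3 * (al^+2 * X^+2 + be^+2 * Y^+2 + ga^+2 * Z^+2)
   - ((al*X - be*Y)^+2 + (al*X-ga*Z)^+2 + (be*Y-ga*Z)^+2) by ring.
apply: (le_trans (y := 3 * (al^+2 * X^+2 + be^+2 * Y^+2 + ga^+2 * Z^+2))).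
  by rewrite e lerBlDr lerDl !addr_ge0 // sqr_ge0.
rewrite ler_pM2l // -!expr2; repeat apply: lerD;
  by rewrite -[leRHS]mul1r ler_wpM2r // sqr_ge0.
Qed.

Lemma sq_le1 (a b : R) : 0 <= a <= 1 -> 0 <= b <= 1 -> (a - b) ^+ 2 <= 1.
Proof. move=> /andP[? ?] /andP[? ?]; nra. Qed.

Lemma tri_bound (t : triple R) p q : tri t p -> tri t q ->
  dot (p - q) (p - q) <= 3 * (dot (tx t) (tx t) + dot (ty t) (ty t) + dot (tz t) (tz t)).
Proof.
move=> [a [b [c [a0 b0 c0 habc ->]]]] [a' [b' [c' [a0' b0' c0' habc' ->]]]].
have a1 : a <= 1 by lra. have b1 : b <= 1 by lra. have c1 : c <= 1 by lra.
have a1' : a' <= 1 by lra. have b1' : b' <= 1 by lra. have c1' : c' <= 1 by lra.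
have ha := @sq_le1 a a'. have hb := @sq_le1 b b'.
have hc := @sq_le1 c c'.
rewrite !dotE !mxE.
have E (X Y Z : R) : a * X + b * Y + c * Z - (a' * X + b' * Y + c' * Z)
   = (a - a') * X + (b - b') * Y + (c - c') * Z by ring.
rewrite !E -!expr2.
have -> : forall X0 X1 X2 Y0 Y1 Y2 Z0 Z1 Z2 : R,
  3 * (X0 * X0 + X1 * X1 + X2 * X2 + (Y0 * Y0 + Y1 * Y1 + Y2 * Y2) + (Z0 * Z0 + Z1 * Z1 + Z2 * Z2))
  = 3 * (X0 * X0 + Y0 * Y0 + Z0 * Z0) + 3 * (X1 * X1 + Y1 * Y1 + Z1 * Z1) + 3 * (X2 * X2 + Y2 * Y2 + Z2 * Z2).
  by move=> *; ring.
by repeat apply: lerD; (apply: coord3; [apply: ha|apply: hb|apply: hc]); apply/andP.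
Qed.

Lemma diam_ub {t : triple R} {p q} : tri t p -> tri t q -> enorm (p - q) <= diam (tri t).
Proof.
move=> hp hq; apply: sup_upper_bound; last by exists p, q.
split; first by exists (enorm (p - q)), p, q.
exists (Num.sqrt (3 * (dot (tx t) (tx t) + dot (ty t) (ty t) + dot (tz t) (tz t)))).
move=> r [p' [q' [hp' hq' ->]]]; apply: ler_wsqrtr; exact: tri_bound.
Qed.

Lemma diam_ge0 (t : triple R) : 0 <= diam (tri t).
Proof.
have hx : tri t (tx t).
  exists 1, 0, 0; split => //; first by rewrite !addr0.
  by rewrite !scale0r !addr0 scale1r.
exact: (le_trans (enorm_ge0 _) (diam_ub hx hx)).
Qed.

Lemma crossE u v : [/\ cross u v 0 0 = u 0 1 * v 0 2 - u 0 2 * v 0 1,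
  cross u v 0 1 = u 0 2 * v 0 0 - u 0 0 * v 0 2 &
  cross u v 0 2 = u 0 0 * v 0 1 - u 0 1 * v 0 0].
Proof. by rewrite !mxE. Qed.

Lemma key m u v :
  dot (cross u v) (cross u v) * dot m m = dot m (cross u v) ^+ 2 + (dot m u ^+ 2 * dot v v + dot m v ^+ 2 * dot u u
     - 2 * dot m u * dot m v * dot u v).
Proof.
have [h0 h1 h2] := crossE u v.
rewrite !dotE h0 h1 h2; ring.
Qed.

Lemma Qbound (a b : R) u v :
  a ^+ 2 * dot v v + b ^+ 2 * dot u u - 2 * a * b * dot u v
  <= 2 * (a ^+ 2 * dot v v + b ^+ 2 * dot u u).
Proof.
have h := dot_ge0 (a *: v + b *: u).
have e : dot (a *: v + b *: u) (a *: v + b *: u) =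
  a ^+ 2 * dot v v + b ^+ 2 * dot u u + 2 * a * b * dot u v.
  by rewrite !dotE !mxE; ring.
rewrite e in h; lra.
Qed.

Lemma core m u v nu (s D F Cs : R) :
  let N := cross u v in
  0 < Cs ->
  dot m m = 1 -> nu = s *: N -> s ^+ 2 * dot N N = 1 -> 0 < dot N N ->
  0 <= dot m nu ->
  dot m u ^+ 2 <= D ^+ 2 * F ^+ 2 * dot u u ->
  dot m v ^+ 2 <= D ^+ 2 * F ^+ 2 * dot v v ->
  dot u u <= D ^+ 2 -> dot v v <= D ^+ 2 ->
  4 * D ^+ 4 <= Cs ^+ 2 * dot N N ->
  dot (m - nu) (m - nu) <= (2 * Cs * D * F) ^+ 2.
Proof.
move=> N Cs0 hm hnu hs hP hc ha hb hU hV hreg.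
have hk := key m u v; rewrite -/N hm mulr1 in hk.
have hcs := CS m N; rewrite hm mul1r in hcs.
have hcE : dot m nu = s * dot m N by rewrite hnu !dotE !mxE; ring.
have hXE : dot (m - nu) (m - nu) = dot m m - 2 * dot m nu + s ^+ 2 * dot N N.
  by rewrite hnu !dotE !mxE; ring.
set P := dot N N in hk hcs hs hP hreg hXE.
set mu := dot m N in hk hcs hcE.
set al := dot m u in hk ha. set be := dot m v in hk hb.
set U := dot u u in hk ha hU. set V := dot v v in hk hb hV.
set X := dot (m - nu) (m - nu) in hXE *.
set Q := al ^+ 2 * V + be ^+ 2 * U - 2 * al * be * dot u v in hk.
have hQ : Q <= 2 * (al ^+ 2 * V + be ^+ 2 * U) by apply: Qbound.
set c := dot m nu in hc hcE hXE.
rewrite hm hs in hXE.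
have hQ0 : 0 <= Q by lra.
have hc2 : c ^+ 2 = 1 - s ^+ 2 * Q.
  have e : mu ^+ 2 = P - Q by lra.
  by rewrite hcE exprMn e mulrBr hs.
have hs2 : 0 <= s ^+ 2 by apply: sqr_ge0.
have hc1 : c <= 1 by nra.
have hX1 : X <= 2 * s ^+ 2 * Q by nra.
have hPX : P * X <= 2 * Q by nra.
have U0 : 0 <= U := dot_ge0 u. have V0 : 0 <= V := dot_ge0 v.
have DF0 : 0 <= D ^+ 2 * F ^+ 2 by rewrite mulr_ge0 // sqr_ge0.
have h1 : al ^+ 2 * V <= D ^+ 2 * F ^+ 2 * U * V by rewrite ler_wpM2r.
have h2 : be ^+ 2 * U <= D ^+ 2 * F ^+ 2 * U * V by rewrite -mulrA [U * V]mulrC mulrA ler_wpM2r.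
have hUV : U * V <= D ^+ 2 * D ^+ 2 by apply: ler_pM.
have h3 : P * X <= 8 * (D ^+ 2 * F ^+ 2) * (D ^+ 2 * D ^+ 2).
  have : D ^+ 2 * F ^+ 2 * (U * V) <= D ^+ 2 * F ^+ 2 * (D ^+ 2 * D ^+ 2) by rewrite ler_wpM2l.
  rewrite !mulrA in h1 h2 *; lra.
have X0 : 0 <= X := dot_ge0 (m - nu).
have DD0 : 0 <= D ^+ 2 * D ^+ 2 by rewrite mulr_ge0 // sqr_ge0.
have eD : D ^+ 4 = D ^+ 2 * D ^+ 2 by ring.
rewrite eD in hreg.
have h4 : 4 * (D ^+ 2 * D ^+ 2) * X <= Cs ^+ 2 * (8 * (D ^+ 2 * F ^+ 2) * (D ^+ 2 * D ^+ 2)).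
  apply: (le_trans (y := Cs ^+ 2 * P * X)); first by rewrite ler_wpM2r.
  by rewrite -mulrA ler_wpM2l // sqr_ge0.
have -> : (2 * Cs * D * F) ^+ 2 = 4 * (Cs ^+ 2 * (D ^+ 2 * F ^+ 2)) by ring.
have CDF : 0 <= Cs ^+ 2 * (D ^+ 2 * F ^+ 2) by rewrite mulr_ge0 // sqr_ge0.
have [D0|DN0] := eqVneq (D ^+ 2) 0.
  rewrite D0 !mul0r mulr0 in h3.
  have : X <= 0 by nra.
  lra.
have Dp : 0 < D ^+ 2 * D ^+ 2.
  by rewrite lt_def mulf_neq0 //= mulr_ge0 // sqr_ge0.
have h5 : X <= 2 * (Cs ^+ 2 * (D ^+ 2 * F ^+ 2)).
  have e5 : Cs ^+ 2 * (8 * (D ^+ 2 * F ^+ 2) * (D ^+ 2 * D ^+ 2)) =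
    (2 * (Cs ^+ 2 * (D ^+ 2 * F ^+ 2))) * (4 * (D ^+ 2 * D ^+ 2)) by ring.
  rewrite e5 [4 * _ * X]mulrC in h4.
  by rewrite -(ler_pM2r (_ : 0 < 4 * (D ^+ 2 * D ^+ 2))) // mulr_gt0.
lra.
Qed.

Lemma dot_gt0 u : u != 0 -> 0 < dot u u.
Proof.
move=> hu; rewrite lt_def dot_ge0 andbT; apply: contra hu => /eqP h.
have h' : \sum_(i < 3) u 0 i * u 0 i = 0 by exact: h.
apply/eqP/rowP => i; rewrite mxE.
have /psumr_eq0P : \sum_(i < 3) u 0 i ^+ 2 = 0.
  by rewrite -[RHS]h'; apply: eq_bigr => j _; rewrite expr2.
move=> /(_ (fun j _ => sqr_ge0 (u 0 j)) i isT) /eqP.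
by rewrite sqrf_eq0 => /eqP.
Qed.

Lemma orth_bound m n1 u : dot n1 ((enorm u)^-1 *: u) = 0 ->
  dot m u ^+ 2 <= dot (m - n1) (m - n1) * dot u u.
Proof.
move=> h.
have [e0|en0] := eqVneq (enorm u) 0.
  have hu : dot u u = 0 by rewrite -enorm_sq e0 expr0n.
  by have := CS m u; rewrite hu !mulr0.
have e1 : dot n1 ((enorm u)^-1 *: u) = (enorm u)^-1 * dot n1 u by rewrite !dotE !mxE; ring.
rewrite e1 in h; move/eqP: h; rewrite mulf_eq0 invr_eq0 (negbTE en0) /= => /eqP h.
have -> : dot m u = dot (m - n1) u by rewrite !dotE !mxE; rewrite dotE in h; lra.
exact: CS.
Qed.

Lemma mid_in (t : triple R) a b : tri t a -> tri t b -> tri t (midpoint a b).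
Proof.
move=> [a1 [a2 [a3 [h1 h2 h3 h4 ->]]]] [b1 [b2 [b3 [g1 g2 g3 g4 ->]]]].
exists (2^-1 * (a1 + b1)), (2^-1 * (a2 + b2)), (2^-1 * (a3 + b3)); split.
- lra.
- lra.
- lra.
- lra.
- by apply/rowP => i; rewrite !mxE; ring.
Qed.

Lemma vx_in (t : triple R) : tri t (tx t).
Proof. exists 1, 0, 0; split => //; first by rewrite !addr0.
by rewrite !scale0r !addr0 scale1r. Qed.
Lemma vy_in (t : triple R) : tri t (ty t).
Proof. exists 0, 1, 0; split => //; first by rewrite add0r addr0.
by rewrite !scale0r add0r addr0 scale1r. Qed.
Lemma vz_in (t : triple R) : tri t (tz t).
Proof. exists 0, 0, 1; split => //; first by rewrite !add0r.
by rewrite !scale0r !add0r scale1r. Qed.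

Lemma diff_bound (t : triple R) (A : 'M[R]_3) (c p q np nq : vec R) :
  tri t p -> tri t q -> c + p *m A = np -> c + q *m A = nq ->
  dot (np - nq) (np - nq) <= diam (tri t) ^+ 2 * frob A ^+ 2.
Proof.
move=> hp hq <- <-.
have -> : c + p *m A - (c + q *m A) = (p - q) *m A.
  by rewrite mulmxBl opprD addrACA subrr add0r.
apply: le_trans (frob_bound _ _) _.
rewrite ler_wpM2r ?sqr_ge0 // -enorm_sq.
have h := diam_ub hp hq; have h0 := enorm_ge0 (p - q).
by rewrite ler_pXn2r // nnegrE ?diam_ge0.
Qed.

End S.

Unset Implicit Arguments.
Set Strict Implicit.

Theorem lemma3p1 (R : realType) (Cs : R) (hCs : 1 < Cs) :
  exists C : R, 0 < C /\
  forall (T : seq (triple R)) (nbar n : set (vec R) -> vec R),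
    triangular_complex T -> regular Cs T ->
    normal_choice T nbar -> unit_edge_director T nbar n ->
    forall t t' (e : set (vec R)), t \in T -> t' \in T -> tri t <> tri t' ->
      is_edge_of t e -> tri t `&` tri t' = e ->
      forall A : 'M[R]_3, is_Dn n t A ->
        enorm (n e - nbar (tri t)) <= C * diam (tri t) * frob A.
Proof.
have Cs0 : 0 < Cs by lra.
exists (2 * Cs); split; first by lra.
move=> T nbar n [hnc _] hreg hnb hdir t t' e tT _ _ he _ A [[c [h1 h2 h3]] _].
set D := diam (tri t). set F := frob A.
set u := ty t - tx t. set v := tz t - tx t.
have hN : tcross t != 0 := hnc t tT.
have hP : 0 < dot (tcross t) (tcross t) := dot_gt0 hN.
have en0 : enorm (tcross t) != 0.
  by apply/eqP => h0; move: hP; rewrite -enorm_sq h0 expr0n ltxx.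
set nu := nbar (tri t).
have [s [hnu hs]] : exists s, nu = s *: tcross t /\ s ^+ 2 * dot (tcross t) (tcross t) = 1.
  have hk : (enorm (tcross t))^-1 ^+ 2 * dot (tcross t) (tcross t) = 1.
    by rewrite -enorm_sq exprVn mulVf // expf_neq0.
  rewrite /nu; case: (hnb t tT) => ->; first by exists (enorm (tcross t))^-1.
  by exists (- (enorm (tcross t))^-1); rewrite scaleNr sqrrN.
have hreg' : 4 * D ^+ 4 <= Cs ^+ 2 * dot (tcross t) (tcross t).
  have := hreg t tT; rewrite /area -/D => hr.
  have D0 : 0 <= D := diam_ge0 t.
  have e0 := enorm_ge0 (tcross t).
  have hr2 : 2 * D ^+ 2 <= Cs * enorm (tcross t).
    have : Cs * (Cs^-1 * D ^+ 2) <= Cs * (enorm (tcross t) / 2) by rewrite ler_pM2l.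
    rewrite mulVKf ?gt_eqF // => hh; lra.
  have D20 : 0 <= 2 * D ^+ 2 by rewrite mulr_ge0 // sqr_ge0.
  have CE : 0 <= Cs * enorm (tcross t) by rewrite mulr_ge0 // ltW.
  have : (2 * D ^+ 2) ^+ 2 <= (Cs * enorm (tcross t)) ^+ 2 by nra.
  rewrite [(Cs * _) ^+ 2]exprMn enorm_sq.
  by have -> : 4 * D ^+ 4 = (2 * D ^+ 2) ^+ 2 by ring.
have E1 : edge_endpoints t (tx t) (ty t) by left.
have E2 : edge_endpoints t (ty t) (tz t) by right; left.
have E3 : edge_endpoints t (tx t) (tz t) by right; right.
have [un1 or1 ng1] := hdir t _ _ tT E1.
have [un2 _ ng2] := hdir t _ _ tT E2.
have [un3 or3 ng3] := hdir t _ _ tT E3.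
have G1 := ng1 t tT (or_introl erefl).
have G2 := ng2 t tT (or_intror (or_introl erefl)).
have G3 := ng3 t tT (or_intror (or_intror erefl)).
have M1 := mid_in (vx_in t) (vy_in t).
have M2 := mid_in (vy_in t) (vz_in t).
have M3 := mid_in (vx_in t) (vz_in t).
have unit m : enorm m = 1 -> dot m m = 1 by move=> hm; rewrite -enorm_sq hm expr1n.
have hb : forall p m, tri t p -> c + p *m A = m ->
      dot m u ^+ 2 <= D ^+ 2 * F ^+ 2 * dot u u /\
      dot m v ^+ 2 <= D ^+ 2 * F ^+ 2 * dot v v.
  move=> p m hp hpm; split.
  - apply: le_trans (orth_bound m or1) _; rewrite ler_wpM2r ?dot_ge0 //.
    exact: diff_bound hp M1 hpm h1.
  - apply: le_trans (orth_bound m or3) _; rewrite ler_wpM2r ?dot_ge0 //.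
    exact: diff_bound hp M3 hpm h3.
suff main : forall m, dot m m = 1 -> 0 <= dot m nu ->
    (exists2 p, tri t p & c + p *m A = m) ->
    enorm (m - nu) <= 2 * Cs * D * F.
  case: he => [->|[->|->]].
  - by apply: main; [exact: unit|exact: G1|exists (midpoint (tx t) (ty t))].
  - by apply: main; [exact: unit|exact: G2|exists (midpoint (ty t) (tz t))].
  - by apply: main; [exact: unit|exact: G3|exists (midpoint (tx t) (tz t))].
move=> m hm hc [p hp hpm].
have [ha hb'] := @hb p m hp hpm.
have hX : dot (m - nu) (m - nu) <= (2 * Cs * D * F) ^+ 2.
  apply: (@core R m u v nu s D F Cs) => //.
  - by rewrite -enorm_sq; have := diam_ub (vy_in t) (vx_in t); have := enorm_ge0 u;
      move=> *; rewrite ler_pXn2r // nnegrE ?diam_ge0.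
  - by rewrite -enorm_sq; have := diam_ub (vz_in t) (vx_in t); have := enorm_ge0 v;
      move=> *; rewrite ler_pXn2r // nnegrE ?diam_ge0.
have R0 : 0 <= 2 * Cs * D * F.
  by rewrite !mulr_ge0 ?(ltW Cs0) ?diam_ge0 ?sqrtr_ge0.
rewrite /enorm -(ger0_norm R0) -sqrtr_sqr.
exact: ler_wsqrtr.
Qed.
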